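(* (i) For all $x\in[-0.5,0.5]$, $|E_4(x+0.65i)|<5.9$. (ii) For all $x\in[-0.5,0.5]$, $|E_4(x+0.75i)|<3.45$.
   Context: $q=e^{2\pi i\tau}$ for $\tau$ in the upper half plane, and $E_4(\tau)=1+240\sum_{n\ge1}\sigma_3(n)q^n$ with $\sigma_3(n)=\sum_{d\mid n}d^3$. *)

(* Defs.v *)
From Stdlib Require Import Reals Lra Arith.
From Coquelicot Require Import Coquelicot.
Open Scope R_scope.

(* sigma_3(n) = sum of d^3 over divisors d of n (sigma3 0 = 0, unused). *)
Fixpoint sum_div3 (n d : nat) : nat :=
  match d with
  | O => O
  | S d' => (if Nat.eqb (n mod (S d')) 0 then (S d') ^ 3 else 0)%nat + sum_div3 n d'
  end.
Definition sigma3 (n : nat) : nat := sum_div3 n n.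

Definition cexp (z : C) : C := (exp (fst z) * cos (snd z), exp (fst z) * sin (snd z)).

Definition qnome (tau : C) : C := cexp (Cmult (RtoC (2 * PI)) (Cmult Ci tau)).

(* n-th term sigma_3(n) q^n (the n = 0 term is 0 since sigma3 0 = 0). *)
Definition E4_term (tau : C) (n : nat) : C :=
  Cmult (RtoC (INR (sigma3 n))) (pow_n (qnome tau) n).

(* E_4(tau) = 1 + 240 * sum_{n>=1} sigma_3(n) q^n; the complex series is summed
   componentwise (real and imaginary parts). *)
Definition E4 (tau : C) : C :=
  Cplus (RtoC 1)
    (Cmult (RtoC 240)
       (Series (fun n => fst (E4_term tau n)), Series (fun n => snd (E4_term tau n)))).

(* Main.v *)
Require Import Defs.
From Stdlib Require Import Reals Lra Lia.
From Coquelicot Require Import Coquelicot.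
Open Scope R_scope.

Fixpoint factR (n : nat) : R := match n with O => 1 | S m => INR (S m) * factR m end.
Lemma factR_ok n : INR (Factorial.fact n) = factR n.
Proof. induction n; simpl factR; [reflexivity|]. rewrite fact_simpl, mult_INR, IHn; reflexivity. Qed.

Lemma PI_lb : 31415/10000 < PI.
Proof.
assert (H : 31415/20000 < PI/2); [|lra].
apply PI2_lower_bound;[split; lra | ].
destruct (pre_cos_bound (31415/20000) 3) as [t _]; [lra | lra | ].
apply Rlt_le_trans with (2 := t); clear t.
unfold cos_approx; simpl sum_f_R0; unfold cos_term.
rewrite !factR_ok. simpl factR.
simpl Nat.mul. field_simplify. apply Rdiv_lt_0_compat; lra.
Qed.

Lemma sq_step (a : R) : forall b t, 0 <= a -> b <= a * a -> a <= exp (t/2) -> b <= exp t.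
Proof.
intros b t H0 H1 H2.
replace t with (t/2 + t/2) by field. rewrite exp_plus.
apply Rle_trans with (1 := H1). apply Rmult_le_compat; lra.
Qed.

Lemma exp_lb1 s : 1 + s <= exp s.
Proof. apply exp_ineq1_le. Qed.

Lemma exp_59 : 59 <= exp (40839/10000).
Proof.
apply (sq_step (770366006961/100000000000)); [lra|lra|].
apply (sq_step (693886701379/250000000000)); [lra|lra|].
apply (sq_step (1665997240549/1000000000000)); [lra|lra|].
apply (sq_step (322683788769/250000000000)); [lra|lra|].
apply (sq_step (1136105257041/1000000000000)); [lra|lra|].
apply (sq_step (266470596061/250000000000)); [lra|lra|].
apply (sq_step (41296632003/40000000000)); [lra|lra|].
apply (sq_step (508039319363/500000000000)); [lra|lra|].
apply (sq_step (1008007261247/1000000000000)); [lra|lra|].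
apply (sq_step (501997824011/500000000000)); [lra|lra|].
apply (sq_step (500997916169/500000000000)); [lra|lra|].
apply (sq_step (1000997418747/1000000000000)); [lra|lra|].
apply (sq_step (25012464627/25000000000)); [lra|lra|].
apply (sq_step (163880839/163840000)); [lra|lra|].
eapply Rle_trans; [|apply exp_lb1]; lra.
Qed.

Lemma exp_110 : 110 <= exp (4712/1000).
Proof.
apply (sq_step (5272549847089/500000000000)); [lra|lra|].
apply (sq_step (3247321926477/1000000000000)); [lra|lra|].
apply (sq_step (1802032720701/1000000000000)); [lra|lra|].
apply (sq_step (53695924921/40000000000)); [lra|lra|].
apply (sq_step (144827382329/125000000000)); [lra|lra|].
apply (sq_step (53819584229/50000000000)); [lra|lra|].
apply (sq_step (1037492980497/1000000000000)); [lra|lra|].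
apply (sq_step (1018573993629/1000000000000)); [lra|lra|].
apply (sq_step (252311067141/250000000000)); [lra|lra|].
apply (sq_step (100461150131/100000000000)); [lra|lra|].
apply (sq_step (250575774631/250000000000)); [lra|lra|].
apply (sq_step (62571930437/62500000000)); [lra|lra|].
apply (sq_step (125071909753/125000000000)); [lra|lra|].
apply (sq_step (2048589/2048000)); [lra|lra|].
eapply Rle_trans; [|apply exp_lb1]; lra.
Qed.

Lemma sum_div3_le n d : (sum_div3 n d <= d ^ 4)%nat.
Proof.
induction d as [|d IH]; [simpl; lia|].
change (sum_div3 n (S d)) with ((if Nat.eqb (n mod S d) 0 then S d ^ 3 else 0) + sum_div3 n d)%nat.
assert (H3 : (d ^ 3 <= S d ^ 3)%nat) by (apply Nat.pow_le_mono_l; lia).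
assert (H4 : (d ^ 4 = d * d ^ 3)%nat) by (rewrite <- Nat.pow_succ_r'; reflexivity).
assert (H5 : (S d ^ 4 = S d ^ 3 + d * S d ^ 3)%nat) by (rewrite (Nat.pow_succ_r' (S d) 3); ring).
assert (H6 : (d * d ^ 3 <= d * S d ^ 3)%nat) by (apply Nat.mul_le_mono_l; exact H3).
destruct (Nat.eqb (n mod S d) 0);
  revert IH H4 H5 H6; generalize (sum_div3 n d) (d ^ 4)%nat (S d ^ 4)%nat (S d ^ 3)%nat (d * d ^ 3)%nat (d * S d ^ 3)%nat; intros; lia.
Qed.

Lemma pow4_le_5 n : (n ^ 4 <= 5 ^ n)%nat.
Proof.
induction n as [|n IH]; [simpl; lia|].
destruct (Nat.le_gt_cases 3 n) as [Hn|Hn].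
- assert (H1 : (3 * S n <= 4 * n)%nat) by lia.
  assert (H2 : ((3 * S n) ^ 4 <= (4 * n) ^ 4)%nat) by (apply Nat.pow_le_mono_l; exact H1).
  rewrite !Nat.pow_mul_l in H2. simpl (3 ^ 4)%nat in H2. simpl (4 ^ 4)%nat in H2.
  rewrite (Nat.pow_succ_r' 5 n). revert H2 IH. generalize (S n ^ 4)%nat (n ^ 4)%nat (5 ^ n)%nat. intros. lia.
- destruct n as [|[|[|n]]]; simpl; lia.
Qed.

Lemma sigma3_le n : INR (sigma3 n) <= 5 ^ n.
Proof.
replace 5 with (INR 5) by (simpl; lra). rewrite <- pow_INR.
apply le_INR. unfold sigma3. eapply Nat.le_trans; [apply sum_div3_le|apply pow4_le_5].
Qed.

Lemma cmod_qnome x y : Cmod (qnome (x, y)) = exp (- (2 * PI * y)).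
Proof.
unfold Cmod, qnome, cexp, RtoC, Ci, Cmult; simpl fst; simpl snd.
set (th := 2 * PI * (0 * y + 1 * x) + 0 * (0 * x - 1 * y)). set (e := exp _).
assert (He : 0 < e) by apply exp_pos.
replace ((e * cos th) ^ 2 + (e * sin th) ^ 2) with (e ^ 2).
- rewrite sqrt_pow2 by lra. unfold e. f_equal. ring.
- transitivity (e^2 * (Rsqr (sin th) + Rsqr (cos th))); [rewrite sin2_cos2; ring | unfold Rsqr; ring].
Qed.

Lemma cmod_pow (z : C) n : Cmod (pow_n z n) = Cmod z ^ n.
Proof.
induction n as [|n IH]; simpl.
- apply Cmod_1.
- change (Cmod (Cmult z (pow_n z n)) = Cmod z * Cmod z ^ n).
  rewrite Cmod_mult, IH. reflexivity.
Qed.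

Lemma cmod_term tau n : Cmod (E4_term tau n) = INR (sigma3 n) * Cmod (qnome tau) ^ n.
Proof.
unfold E4_term. rewrite Cmod_mult, Cmod_R, cmod_pow, Rabs_pos_eq by apply pos_INR.
reflexivity.
Qed.

Lemma ex_geom (q : R) : 0 <= q < 1 -> ex_series (fun n => q ^ n).
Proof. intros H. exists (/ (1 - q)). apply is_series_geom. rewrite Rabs_pos_eq; lra. Qed.

Lemma Series_zero : Series (fun _ : nat => 0) = 0.
Proof.
transitivity (Series (fun _ : nat => 0 * 1)).
- apply Series_ext; intros; ring.
- rewrite (Series_scal_l 0 (fun _ => 1)). ring.
Qed.

Lemma cs (A B : R) (z : C) : A * fst z + B * snd z <= Cmod (A, B) * Cmod z.
Proof.
destruct z as [p q]. unfold Cmod; simpl fst; simpl snd.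
pose proof (sqrt_cauchy A B p q) as HC. unfold Rsqr in HC.
replace (A ^ 2) with (A * A) by ring. replace (B ^ 2) with (B * B) by ring.
replace (p ^ 2) with (p * p) by ring. replace (q ^ 2) with (q * q) by ring.
exact HC.
Qed.

Lemma normR (x : R) : norm x = Rabs x.
Proof. reflexivity. Qed.

Lemma E4_bound tau :
  let r := Cmod (qnome tau) in 5 * r < 1 ->
  Cmod (E4 tau) <= 1 + 240 * (r + 9 * r ^ 2 + (5 * r) ^ 3 * / (1 - 5 * r)).
Proof.
intros r Hr.
assert (Hr0 : 0 <= r) by apply Cmod_ge_0.
set (b := fun n => Cmod (E4_term tau n)).
set (g := fun n : nat => (5 * r) ^ n).
assert (Hb0 : forall n, 0 <= b n) by (intros; apply Cmod_ge_0).
assert (Hbg : forall n, b n <= g n).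
{ intros n. unfold b, g. rewrite cmod_term, Rpow_mult_distr.
  apply Rmult_le_compat_r; [apply pow_le; lra|apply sigma3_le]. }
assert (Hg : ex_series g) by (apply ex_geom; lra).
assert (Hb : ex_series b).
{ apply (ex_series_le b g); [|exact Hg]. intros n. rewrite normR, Rabs_pos_eq; auto. }
set (u := fun n => fst (E4_term tau n)).
set (v := fun n => snd (E4_term tau n)).
assert (Hu : ex_series u).
{ apply (ex_series_le u b); [|exact Hb]. intros n. rewrite normR.
  unfold u, b. eapply Rle_trans; [|apply Rmax_Cmod]. apply Rmax_l. }
assert (Hv : ex_series v).
{ apply (ex_series_le v b); [|exact Hb]. intros n. rewrite normR.
  unfold v, b. eapply Rle_trans; [|apply Rmax_Cmod]. apply Rmax_r. }
set (A := Series u). set (B := Series v).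
set (M := Cmod (A, B)).
assert (HM0 : 0 <= M) by apply Cmod_ge_0.
assert (HMM : M * M = A * A + B * B).
{ unfold M, Cmod. simpl fst. simpl snd. rewrite sqrt_sqrt; [ring|nra]. }
assert (HS : M <= Series b).
{ assert (Hsum : A * A + B * B = Series (fun n => A * u n + B * v n)).
  { rewrite Series_plus.
    - rewrite !Series_scal_l. reflexivity.
    - apply (ex_series_scal_l A u Hu).
    - apply (ex_series_scal_l B v Hv). }
  assert (Hle : Series (fun n => A * u n + B * v n) <= Series (fun n => M * b n)).
  { assert (Hw : ex_series (fun n => A * u n + B * v n)).
    { apply (ex_series_plus (fun n => A * u n) (fun n => B * v n)).
      - apply (ex_series_scal_l A u Hu).
      - apply (ex_series_scal_l B v Hv). }
    assert (HMb : ex_series (fun n => M * b n)) by apply (ex_series_scal_l M b Hb).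
    assert (H0 : 0 <= Series (fun n => M * b n - (A * u n + B * v n))).
    { rewrite <- Series_zero.
      apply Series_le.
      - intros n. split; [lra|].
        pose proof (cs A B (E4_term tau n)) as HC. unfold u, v, b. change (Cmod (A, B)) with M in HC. lra.
      - apply (ex_series_minus (fun n => M * b n) (fun n => A * u n + B * v n)); assumption. }
    rewrite Series_minus in H0 by assumption. lra. }
  rewrite Series_scal_l in Hle.
  assert (HSb : 0 <= Series b).
  { rewrite <- Series_zero. apply Series_le; [|exact Hb].
    intros n; split; [lra|auto]. }
  destruct (Req_dec M 0) as [Hz|Hz]; [lra|].
  assert (0 < M) by lra. nra. }
assert (HSb : Series b <= r + 9 * r ^ 2 + (5 * r) ^ 3 * / (1 - 5 * r)).
{ rewrite (Series_incr_n b 3) by (lia || exact Hb).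
  simpl sum_f_R0.
  assert (E0 : b 0%nat = 0).
  { unfold b. rewrite cmod_term. simpl. ring. }
  assert (E1 : b 1%nat = r).
  { unfold b. rewrite cmod_term. replace (sigma3 1) with 1%nat by reflexivity. rewrite INR_IZR_INZ. simpl Z.of_nat. fold r. ring. }
  assert (E2 : b 2%nat = 9 * r ^ 2).
  { unfold b. rewrite cmod_term. replace (sigma3 2) with 9%nat by reflexivity. rewrite INR_IZR_INZ. simpl Z.of_nat. fold r. ring. }
  assert (HT : Series (fun k => b (3 + k)%nat) <= Series (fun k => (5 * r) ^ 3 * g k)).
  { apply Series_le.
    - intros k. split; [auto|]. eapply Rle_trans; [apply Hbg|]. unfold g. rewrite pow_add. lra.
    - apply (ex_series_scal_l ((5 * r) ^ 3) g Hg). }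
  rewrite Series_scal_l in HT. unfold g in HT. rewrite Series_geom in HT by (rewrite Rabs_pos_eq; lra).
  lra. }
unfold E4. fold u v. fold A B.
eapply Rle_trans; [apply Cmod_triangle|].
rewrite Cmod_mult, !Cmod_R, Rabs_R1, (Rabs_pos_eq 240) by lra.
fold M. unfold g. cbv beta. lra.
Qed.

Lemma mono r r0 : 0 <= r <= r0 -> 5 * r0 < 1 ->
  r + 9 * r ^ 2 + (5 * r) ^ 3 * / (1 - 5 * r) <= r0 + 9 * r0 ^ 2 + (5 * r0) ^ 3 * / (1 - 5 * r0).
Proof.
intros H H0.
assert (H2 : r ^ 2 <= r0 ^ 2) by (apply pow_incr; lra).
assert (H3 : (5 * r) ^ 3 <= (5 * r0) ^ 3) by (apply pow_incr; lra).
assert (H4 : / (1 - 5 * r) <= / (1 - 5 * r0)) by (apply Rinv_le_contravar; lra).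
assert (0 <= (5 * r) ^ 3) by (apply pow_le; lra).
assert (0 <= / (1 - 5 * r)) by (apply Rlt_le, Rinv_0_lt_compat; lra).
assert ((5 * r) ^ 3 * / (1 - 5 * r) <= (5 * r0) ^ 3 * / (1 - 5 * r0))
  by (apply Rmult_le_compat; lra).
lra.
Qed.

Lemma part (y t0 L r0 K : R) (x : R) :
  L <= exp t0 -> t0 < 2 * PI * y -> 0 < L -> r0 = / L -> 5 * r0 < 1 ->
  1 + 240 * (r0 + 9 * r0 ^ 2 + (5 * r0) ^ 3 * / (1 - 5 * r0)) < K ->
  Cmod (E4 (x, y)) < K.
Proof.
intros HL Ht HL0 Hr0 H5 HK.
pose proof (E4_bound (x, y)) as HE. cbv zeta in HE. rewrite cmod_qnome in HE.
simpl snd in HE.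
assert (Hr : exp (- (2 * PI * y)) <= r0).
{ rewrite exp_Ropp, Hr0. apply Rinv_le_contravar; [lra|].
  apply Rle_trans with (1 := HL). apply Rlt_le, exp_increasing; lra. }
assert (Hp : 0 < exp (- (2 * PI * y))) by apply exp_pos.
pose proof (mono (exp (- (2 * PI * y))) r0 (conj (Rlt_le _ _ Hp) Hr) H5).
assert (5 * exp (- (2 * PI * y)) < 1) by lra.
specialize (HE H0). lra.
Qed.

Theorem lemma4p7 :
  (forall x : R, -(1/2) <= x <= 1/2 -> Cmod (E4 (x, 13/20)) < 59/10) /\
  (forall x : R, -(1/2) <= x <= 1/2 -> Cmod (E4 (x, 3/4)) < 69/20).
Proof.
pose proof PI_lb.
split; intros x _.
- apply (part (13/20) (40839/10000) 59 (1/59)).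
  + apply exp_59.
  + lra.
  + lra.
  + field.
  + lra.
  + replace (/ (1 - 5 * (1/59))) with (59/54) by field. lra.
- apply (part (3/4) (4712/1000) 110 (1/110)).
  + apply exp_110.
  + lra.
  + lra.
  + field.
  + lra.
  + replace (/ (1 - 5 * (1/110))) with (110/105) by field. lra.
Qed.
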